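(* Let $R$ be a finitely generated commutative ring which is reduced, equipped with a ring homomorphism $\alpha:R\to\mathbb{Z}$ and a regular element $r\in R$. Then there exists a finite subset $S\subset R$ such that $\mathcal{K}_r(x)=\mathcal{K}_r^S(x)$ for all $x\in R$.
   Context: An element $r\in R$ is regular if $\alpha(r)\neq 0$ and $x\cdot r=\alpha(x)r$ for all $x\in R$. The Knutson Index $\mathcal{K}_r(x)$ of $x\in R$ is the non-negative integer $m$ such that $Rx\cap\mathbb{Z}r=m\mathbb{Z}r$. For a subset $S\subseteq R$ and $x\in R$, let $S(x)=\{s\in S: s\cdot x\in\mathbb{Z}r\}$ and $\mathrm{Ind}(x)=\{m\in\mathbb{Z}: s\cdot x=m r \text{ for some } s\in S(x)\}$. The Knutson $S$-subindex is $\mathcal{K}_r^S(x)=\gcd(\mathrm{Ind}(x))$, and $\mathcal{K}_r^S(x)=\infty$ if $S(x)=\emptyset$. *)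

(* Defs.v *)
From HB Require Import structures.
From mathcomp Require Import all_boot all_order all_algebra.
Set Implicit Arguments. Unset Strict Implicit. Unset Printing Implicit Defensive.
Import Order.TTheory GRing.Theory Num.Theory.
Local Open Scope ring_scope.

Definition fin_gen_ring (R : comNzRingType) : Prop :=
  exists gs : seq R, forall (P : R -> Prop),
    P 1 ->
    (forall a b, P a -> P b -> P (a - b)) ->
    (forall a b, P a -> P b -> P (a * b)) ->
    (forall g, g \in gs -> P g) ->
    forall x, P x.

Definition reduced_ring (R : comNzRingType) : Prop :=
  forall (x : R) (n : nat), x ^+ n = 0 -> x = 0.

Definition regular_elt (R : comNzRingType) (alpha : {rmorphism R -> int}) (r : R) : Prop :=
  alpha r != 0 /\ forall x : R, x * r = r *~ alpha x.

Definition knutson_index_is (R : comNzRingType) (r x : R) (m : nat) : Prop :=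
  forall y : R,
    ((exists a : R, y = a * x) /\ (exists n : int, y = r *~ n))
    <-> (exists n : int, y = r *~ (m%:Z * n)).

Definition Ind (R : comNzRingType) (S : seq R) (r x : R) (m : int) : Prop :=
  exists2 s, s \in S & s * x = r *~ m.

Definition is_gcd (I : int -> Prop) (g : nat) : Prop :=
  forall d : int, (d %| g%:Z)%Z <-> (forall i, I i -> (d %| i)%Z).

(* Knutson S-subindex: None encodes infinity (S(x) empty),
   Some g encodes gcd(Ind(x)) = g when S(x) is nonempty. *)
Definition subindex_is (R : comNzRingType) (S : seq R) (r x : R) (k : option nat) : Prop :=
  match k with
  | None => forall s, s \in S -> ~ (exists n : int, s * x = r *~ n)
  | Some g => (exists2 s, s \in S & exists n : int, s * x = r *~ n)
              /\ is_gcd (Ind S r x) g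
  end.

(* Main.v *)
Require Import Defs.
From HB Require Import structures.
From mathcomp Require Import all_boot all_order all_algebra.
From Stdlib Require Import ClassicalEpsilon ClassicalDescription Classical.
From mathcomp Require Import zify ring lra.
From Stdlib Require Import Lia.
Import GRing.Theory Num.Theory.
Local Open Scope ring_scope.
Set Implicit Arguments. Unset Strict Implicit.

Definition pb (P : Prop) : bool := if excluded_middle_informative P then true else false.
Lemma pbE (P : Prop) : pb P <-> P.
Proof. by rewrite /pb; case: excluded_middle_informative. Qed.

Definition ideal (R : comNzRingType) (I : R -> Prop) :=
  I 0 /\ (forall a b, I a -> I b -> I (a - b)) /\ (forall a b, I b -> I (a * b)).
Definition span (R : comNzRingType) (s : seq R) (x : R) :=
  exists c : nat -> R, x = \sum_(i < size s) c i * s`_i.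
Definition fgen (R : comNzRingType) (I : R -> Prop) :=
  exists s : seq R, forall x, I x <-> span s x.
Definition noeth (R : comNzRingType) := forall I : R -> Prop, ideal I -> fgen I.

Lemma idealN (R : comNzRingType) (I : R -> Prop) a : ideal I -> I a -> I (- a).
Proof. by move=> [h0 [hB _]] ha; rewrite -sub0r; apply: hB. Qed.
Lemma idealD (R : comNzRingType) (I : R -> Prop) a b : ideal I -> I a -> I b -> I (a + b).
Proof. move=> hI ha hb; rewrite -[b]opprK; have hn := idealN hI hb; by case: hI => _ [hB _]; apply: hB. Qed.
Lemma idealMr (R : comNzRingType) (I : R -> Prop) a b : ideal I -> I a -> I (a * b).
Proof. by move=> [_ [_ hM]] ha; rewrite mulrC; apply: hM. Qed.
Lemma idealMl (R : comNzRingType) (I : R -> Prop) a b : ideal I -> I b -> I (a * b).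
Proof. by move=> [_ [_ hM]] ha; apply: hM. Qed.
Lemma ideal0 (R : comNzRingType) (I : R -> Prop) : ideal I -> I 0.
Proof. by case. Qed.
Lemma idealB (R : comNzRingType) (I : R -> Prop) a b : ideal I -> I a -> I b -> I (a - b).
Proof. by move=> [_ [hB _]]; apply: hB. Qed.
Lemma ideal_sum (R : comNzRingType) (I : R -> Prop) n (F : 'I_n -> R) :
  ideal I -> (forall i, I (F i)) -> I (\sum_(i < n) F i).
Proof.
move=> hI hF; apply: (big_ind I) => //; [exact: ideal0 | move=> ? ?; exact: idealD].
Qed.

Lemma span_ideal (R : comNzRingType) (s : seq R) : ideal (span s).
Proof.
split; first by exists (fun _ => 0); rewrite big1 // => i _; rewrite mul0r.
split.
  move=> a b [c1 ->] [c2 ->]; exists (fun i => c1 i - c2 i).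
  by rewrite -sumrB; apply: eq_bigr => i _; rewrite mulrBl.
move=> a b [c ->]; exists (fun i => a * c i).
by rewrite mulr_sumr; apply: eq_bigr => i _; rewrite mulrA.
Qed.

Lemma span_nth (R : comNzRingType) (s : seq R) i : (i < size s)%N -> span s s`_i.
Proof.
move=> lti; exists (fun j => (j == i)%:R).
rewrite (bigD1 (Ordinal lti)) //= eqxx mul1r big1 ?addr0 // => j /negbTE.
by rewrite -val_eqE /= => ->; rewrite mul0r.
Qed.

Lemma span_mem (R : comNzRingType) (s : seq R) x : x \in s -> span s x.
Proof. by move=> xs; rewrite -(nth_index 0 xs); apply: span_nth; rewrite index_mem. Qed.

Lemma span_sub (R : comNzRingType) (I : R -> Prop) (s : seq R) :
  ideal I -> (forall x, x \in s -> I x) -> forall x, span s x -> I x.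
Proof.
move=> hI hs x [c ->]; apply: ideal_sum => // i; apply: idealMl => //.
by apply: hs; apply: mem_nth.
Qed.

Lemma int_principal (I : int -> Prop) : ideal I ->
  exists m : nat, forall z, I z <-> (m%:Z %| z)%Z.
Proof.
move=> hI.
have Im z k : I z -> I (z * k).
  by move=> hz; apply: idealMr.
have Idvd (m : int) z : I m -> (m %| z)%Z -> I z.
  by move=> hm /dvdzP [k ->]; rewrite mulrC; apply: Im.
case: (classic (exists z, I z /\ z != 0)) => [[z [Iz nz]]|none]; last first.
  exists 0%N => z; rewrite dvd0z; split.
    by move=> Iz; apply/negPn/negP => nz; apply: none; exists z.
  by move/eqP ->; apply: ideal0.
have ex : exists n : nat, pb ((0 < n)%N /\ I n%:Z).
  exists `|z|%N; apply/pbE; split; first by rewrite absz_gt0.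
  have [zge|zlt] := (ler0P z); last by rewrite gtz0_abs.
  by rewrite lez0_abs // -mulrN1; apply: Im.
case: (ex_minnP ex) => m /pbE [m0 Im0] mmin.
exists m => w; split; last by apply: Idvd.
move=> Iw; apply/dvdz_mod0P.
have mne : (m%:Z != 0) by rewrite eqz_nat -lt0n.
have ge := modz_ge0 w mne.
have lt : (w %% m)%Z < m%:Z by apply: ltz_pmod; rewrite ltz_nat.
have Imod : I (w %% m)%Z.
  have -> : (w %% m)%Z = w - (w %/ m)%Z * m%:Z by rewrite {2}(divz_eq w m) addrC addKr.
  by apply: idealB => //; rewrite mulrC; apply: Im.
apply/eqP/negPn/negP => nz2.
have : (m <= `|(w %% m)%Z|%N)%N.
  apply: mmin; apply/pbE; split; first by rewrite absz_gt0.
  by rewrite gez0_abs.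
rewrite leqNgt => /negP; apply.
by rewrite -ltz_nat gez0_abs.
Qed.

Section Hilbert.
Lemma noeth_poly (A : comNzRingType) : noeth A -> noeth {poly A}.
Proof.
move=> nA J hJ.
pose L d (c : A) := exists p : {poly A}, J p /\ (forall j, (d < j)%N -> p`_j = 0) /\ p`_d = c.
have Lid d : ideal (L d).
  split; first by exists 0; split; [exact: ideal0 | split => [j _|]; rewrite coef0].
  split.
    move=> a b [p [Jp [hp <-]]] [q [Jq [hq <-]]]; exists (p - q); split; first exact: idealB.
    by split => [j lj|]; rewrite coefB // hp // hq // subr0.
  move=> a b [p [Jp [hp <-]]]; exists (a%:P * p); split; first exact: idealMl.
  by split => [j lj|]; rewrite coefCM // hp // mulr0.
have Lmono d e c : (d <= e)%N -> L d c -> L e c.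
  move=> de [p [Jp [hp <-]]]; exists ('X^(e - d) * p); split; first exact: idealMl.
  split => [j lj|]; rewrite coefXnM.
    case: ifP => // _; apply: hp; lia.
  by rewrite ltnNge leq_subr /= subKn.
pose Lall c := exists d, L d c.
have Lallid : ideal Lall.
  split; first by exists 0%N; apply: ideal0.
  split.
    move=> a b [d La] [e Lb]; exists (maxn d e); apply: idealB => //.
      by apply: Lmono La; apply: leq_maxl.
    by apply: Lmono Lb; apply: leq_maxr.
  by move=> a b [d Lb]; exists d; apply: idealMl.
have [s hs] := nA _ Lallid.
have gen : forall t : seq A, (forall x, x \in t -> Lall x) -> exists D, forall x, x \in t -> L D x.
  elim => [|y t IH] ht; first by exists 0%N.
  have [e Le] := ht y (mem_head y t).
  have [D' hD'] := IH (fun x xt => ht x (mem_behead (s:=y :: t) xt)).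
  exists (maxn e D') => x; rewrite in_cons => /orP [/eqP ->|xt].
    by apply: Lmono Le; apply: leq_maxl.
  by apply: Lmono (hD' x xt); apply: leq_maxr.
have [D hD] := gen s (fun x xs => proj2 (hs x) (span_mem xs)).
have LD c : Lall c -> L D c.
  by move=> /hs; apply: span_sub.
pose t d := epsilon (inhabits [::]) (fun t => forall x, L d x <-> span t x).
have ht d : forall x, L d x <-> span (t d) x.
  by apply: (epsilon_spec (inhabits [::]) (fun t => forall x, L d x <-> span t x)); apply: nA.
pose w d c := epsilon (inhabits 0) (fun p : {poly A} => J p /\ (forall j, (d < j)%N -> p`_j = 0) /\ p`_d = c).
have hw d c : L d c -> J (w d c) /\ (forall j, (d < j)%N -> (w d c)`_j = 0) /\ (w d c)`_d = c.
  by move=> Ldc; apply: (epsilon_spec (inhabits 0) (fun p : {poly A} => J p /\ (forall j, (d < j)%N -> p`_j = 0) /\ p`_d = c)).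
pose G := flatten (map (fun d => map (w d) (t d)) (seq.iota 0 D.+1)).
have memG d c : (d <= D)%N -> c \in t d -> w d c \in G.
  move=> dD ct; apply/flattenP; exists (map (w d) (t d)); last exact: map_f.
  by apply: (map_f (fun d => map (w d) (t d))); rewrite mem_iota.
have GJ x : x \in G -> J x.
  move=> /flattenP [u /mapP [d _ ->] /mapP [c ct ->]].
  by apply: (proj1 (hw d c _)); apply/ht/span_mem.
exists G => p; split; last by apply: span_sub.
move=> Jp.
have [n hn] : exists n, forall j, (n <= j)%N -> p`_j = 0.
  by exists (size p) => j; apply: nth_default.
elim: n p Jp hn => [|n IH] p Jp hn.
  have -> : p = 0 by apply/polyP => j; rewrite coef0 hn.
  exact: ideal0 (span_ideal G).
have Ldc : L (minn n D) p`_n.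
  case: (leqP n D) => [nD|Dn].
    exists p; split => //; split => // j lj; apply: hn.
  apply: LD; exists n; exists p; split => //; split => // j lj; apply: hn.
move: Ldc; set d := minn n D => Ldc.
have dn : (d <= n)%N by apply: geq_minl.
have [f hf] := proj1 (ht d _) Ldc.
pose q := \sum_(i < size (t d)) (f i)%:P * ('X^(n - d) * w d (t d)`_i).
have hwi (i : 'I_(size (t d))) : L d (t d)`_i by apply/ht/span_nth.
have Gq : span G q.
  apply: ideal_sum; first exact: span_ideal.
  move=> i; apply: idealMl; first exact: span_ideal.
  apply: idealMl; first exact: span_ideal.
  by apply/span_mem/memG; [exact: geq_minr | exact: mem_nth].
have qc j : q`_j = \sum_(i < size (t d)) f i * (if (j < n - d)%N then 0 else (w d (t d)`_i)`_(j - (n - d))).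
  by rewrite coef_sum; apply: eq_bigr => i _; rewrite coefCM coefXnM.
have -> : p = (p - q) + q by rewrite subrK.
apply: idealD; [exact: span_ideal | | exact: Gq].
apply: IH; first by apply: idealB => //; apply: span_sub Gq.
move=> j lj; rewrite coefB qc.
case: (ltngtP n j) => [nj|jn|<-].
  rewrite hn // big1 ?subr0 // => i _; case: ifP => _; first by rewrite mulr0.
  by rewrite (proj1 (proj2 (hw _ _ (hwi i)))) ?mulr0 //; lia.
  by move: jn; rewrite ltnNge lj.
rewrite ltnNge leq_subr /= subKn // hf; apply/eqP; rewrite subr_eq0; apply/eqP.
by apply: eq_bigr => i _; rewrite (proj2 (proj2 (hw _ _ (hwi i)))).
Qed.
End Hilbert.

Lemma noeth_surj (A R : comNzRingType) (f : {rmorphism A -> R}) :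
  (forall x, exists y, f y = x) -> noeth A -> noeth R.
Proof.
move=> fs nA I hI.
have hJ : ideal (fun y => I (f y)).
  split; first by rewrite rmorph0; apply: ideal0.
  split; first by move=> a b ha hb; rewrite rmorphB; apply: idealB.
  by move=> a b hb; rewrite rmorphM; apply: idealMl.
have [s hs] := nA _ hJ.
exists (map f s) => x; split.
  move=> Ix; have [y fy] := fs x; rewrite -fy in Ix *.
  have [c ->] := proj1 (hs y) Ix.
  exists (fun i => f (c i)); rewrite rmorph_sum size_map; apply: eq_bigr => i _.
  by rewrite rmorphM (nth_map 0).
apply: span_sub => // z /mapP [y ys ->]; by apply/hs/span_mem.
Qed.

Lemma noeth_int : noeth int.
Proof.
move=> I hI; have [m hm] := int_principal hI.
exists [:: m%:Z] => x; rewrite hm; split.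
  move/dvdzP => [k ->]; exists (fun _ => k).
  by rewrite big_ord1.
move=> [c ->]; rewrite big_ord1 /=; exact: dvdz_mull.
Qed.

Fixpoint Pk (k : nat) : comNzRingType :=
  match k with 0 => int | k'.+1 => {poly (Pk k')} end.
Lemma commr_all (R : comNzRingType) (A : nzSemiRingType) (f : A -> R) u : commr_rmorph f u.
Proof. by move=> a; rewrite /GRing.comm mulrC. Qed.
Fixpoint evk (R : comNzRingType) (gs : nat -> R) (k : nat) : {rmorphism Pk k -> R} :=
  match k return {rmorphism Pk k -> R} with
  | 0 => (intr : int -> R) : {rmorphism int -> R}
  | k'.+1 => (horner_morph (@commr_all R (Pk k') (@evk R gs k') (gs k'))) : {rmorphism {poly Pk k'} -> R}
  end.

Lemma noeth_Pk k : noeth (Pk k).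
Proof. elim: k => [|k IH]; [exact: noeth_int | exact: noeth_poly]. Qed.

Lemma evk_gen (R : comNzRingType) (gs : nat -> R) k i : (i < k)%N -> exists y, evk gs k y = gs i.
Proof.
elim: k => [//|k IH] lik.
case: (ltngtP i k) => [ik||ik].
- have [y hy] := IH ik; exists (y%:P : Pk k.+1).
  by rewrite /= horner_morphC.
- by rewrite ltnNge -ltnS lik.
- by exists ('X : Pk k.+1); rewrite /= horner_morphX ik.
Qed.

Lemma fg_noeth (R : comNzRingType) : fin_gen_ring R -> noeth R.
Proof.
move=> [gs hgs]; apply: (@noeth_surj _ _ (evk (fun i => gs`_i) (size gs))); last exact: noeth_Pk.
apply: hgs.
- by exists 1; rewrite rmorph1.
- by move=> a b [y <-] [z <-]; exists (y - z); rewrite rmorphB.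
- by move=> a b [y <-] [z <-]; exists (y * z); rewrite rmorphM.
- move=> g gin; rewrite -(nth_index 0 gin); apply: evk_gen; by rewrite index_mem.
Qed.

Definition prime_id (R : comNzRingType) (p : R -> Prop) :=
  ideal p /\ ~ p 1 /\ forall a b, p (a * b) -> p a \/ p b.

Fixpoint prodin (R : comNzRingType) (ps : seq (R -> Prop)) (z : R) : Prop :=
  match ps with
  | [::] => z = 1
  | p :: ps' => exists y w, p y /\ prodin ps' w /\ z = y * w
  end.

Fixpoint allprime (R : comNzRingType) (I : R -> Prop) (ps : seq (R -> Prop)) : Prop :=
  match ps with
  | [::] => True
  | p :: ps' => prime_id p /\ (forall z, I z -> p z) /\ allprime I ps'
  end.

Definition covered (R : comNzRingType) (I : R -> Prop) :=
  exists ps, allprime I ps /\ forall z, prodin ps z -> I z.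

Lemma prodin_cat (R : comNzRingType) (ps1 ps2 : seq (R -> Prop)) z :
  prodin (ps1 ++ ps2) z -> exists z1 z2, prodin ps1 z1 /\ prodin ps2 z2 /\ z = z1 * z2.
Proof.
elim: ps1 z => [|p ps IH] z /=; first by move=> h; exists 1, z; rewrite mul1r.
move=> [y [w [py [hw ->]]]]; have [z1 [z2 [h1 [h2 ->]]]] := IH _ hw.
exists (y * z1), z2; split; last by split => //; rewrite mulrA.
by exists y, z1.
Qed.

Lemma allprime_cat (R : comNzRingType) (I : R -> Prop) ps1 ps2 :
  allprime I ps1 -> allprime I ps2 -> allprime I (ps1 ++ ps2).
Proof. by elim: ps1 => [//|p ps IH] /= [h1 [h2 h3]] h4; split => //; split => //; apply: IH. Qed.

Lemma allprime_mono (R : comNzRingType) (I J : R -> Prop) ps :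
  (forall z, I z -> J z) -> allprime J ps -> allprime I ps.
Proof. by move=> IJ; elim: ps => [//|p ps IH] /= [h1 [h2 h3]]; split => //; split; auto. Qed.

Lemma noeth_max (R : comNzRingType) (F : (R -> Prop) -> Prop) I0 :
  noeth R -> (forall I, F I -> ideal I) -> F I0 ->
  exists M, F M /\ forall J, F J -> (forall x, M x -> J x) -> forall x, J x -> M x.
Proof.
move=> nR Fid FI0; apply: NNPP => nomax.
have step : forall M, F M -> exists J, F J /\ (forall x, M x -> J x) /\ exists x, J x /\ ~ M x.
  move=> M FM; apply: NNPP => h; apply: nomax; exists M; split => // J FJ MJ x Jx.
  apply: NNPP => nMx; apply: h; exists J; split => //; split => //; by exists x.
pose nxt M := epsilon (inhabits M) (fun J => F J /\ (forall x, M x -> J x) /\ exists x, J x /\ ~ M x).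
have hnxt M : F M -> F (nxt M) /\ (forall x, M x -> nxt M x) /\ exists x, nxt M x /\ ~ M x.
  by move=> FM; apply: (epsilon_spec (inhabits M) (fun J => F J /\ (forall x, M x -> J x) /\ exists x, J x /\ ~ M x)); apply: step.
pose c := fix c n := if n is n'.+1 then nxt (c n') else I0.
have Fc n : F (c n) by elim: n => [//|n IH] /=; apply: (proj1 (hnxt _ IH)).
have cmono n m : (n <= m)%N -> forall x, c n x -> c m x.
  move=> nm; rewrite -(subnKC nm); elim: (m - n)%N => [|k IH] x; first by rewrite addn0.
  by move=> /IH; rewrite addnS /=; apply: (proj1 (proj2 (hnxt _ (Fc _)))).
pose U x := exists n, c n x.
have hU : ideal U.
  split; first by exists 0%N; apply: ideal0 (Fid _ FI0).
  split; last by move=> a b [n hb]; exists n; apply: idealMl => //; apply: Fid.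
  move=> a b [n ha] [m hb]; exists (maxn n m); apply: idealB; first exact: Fid.
    by apply: cmono ha; apply: leq_maxl.
  by apply: cmono hb; apply: leq_maxr.
have [s hs] := nR _ hU.
have gen : forall t : seq R, (forall x, x \in t -> U x) -> exists N, forall x, x \in t -> c N x.
  elim => [|y t IH] ht; first by exists 0%N.
  have [e Le] := ht y (mem_head y t).
  have [D' hD'] := IH (fun x xt => ht x (mem_behead (s:=y :: t) xt)).
  exists (maxn e D') => x; rewrite in_cons => /orP [/eqP ->|xt].
    by apply: cmono Le; apply: leq_maxl.
  by apply: cmono (hD' x xt); apply: leq_maxr.
have [N hN] := gen s (fun x xs => proj2 (hs x) (span_mem xs)).
have [x [h1 h2]] := proj2 (proj2 (hnxt _ (Fc N))).
apply: h2; apply: (span_sub (Fid _ (Fc N)) hN); apply/hs; by exists N.+1.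
Qed.

Lemma all_covered (R : comNzRingType) (I : R -> Prop) : noeth R -> ideal I -> covered I.
Proof.
move=> nR hI; apply: NNPP => nc.
have [M [[hM ncM] Mmax]] := @noeth_max R (fun J => ideal J /\ ~ covered J) I nR (fun J h => proj1 h) (conj hI nc).
apply: ncM.
case: (classic (M 1)) => [M1|nM1].
  by exists [::]; split => // z /= ->.
case: (classic (forall a b, M (a * b) -> M a \/ M b)) => [pr|npr].
  exists [:: M]; split; first by split; [split => //|split].
  by move=> z /= [y [w [My [-> ->]]]]; rewrite mulr1.
have [a [b [Mab [nMa nMb]]]] : exists a b, M (a * b) /\ ~ M a /\ ~ M b.
  apply: NNPP => h; apply: npr => a b Mab; apply: NNPP => h2; apply: h; exists a, b.
  by split => //; split => h3; apply: h2; [left|right].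
have ext u : ~ M u -> covered (fun z => exists i c, M i /\ z = i + c * u).
  move=> nMu; apply: NNPP => ncu.
  have idu : ideal (fun z => exists i c, M i /\ z = i + c * u).
    split; first by exists 0, 0; rewrite mul0r addr0; split => //; apply: ideal0.
    split.
      move=> x y [i [c [Mi ->]]] [j [d [Mj ->]]]; exists (i - j), (c - d); split; first exact: idealB.
      by rewrite mulrBl opprD addrACA.
    move=> x y [i [c [Mi ->]]]; exists (x * i), (x * c); split; first exact: idealMl.
    by rewrite mulrDr mulrA.
  have sub : forall z, M z -> exists i c, M i /\ z = i + c * u.
    by move=> z Mz; exists z, 0; rewrite mul0r addr0.
  apply: nMu; apply: (Mmax _ (conj idu ncu) sub u).
  by exists 0, 1; rewrite mul1r add0r; split => //; apply: ideal0.
have [psa [apa hpa]] := ext a nMa.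
have [psb [apb hpb]] := ext b nMb.
exists (psa ++ psb); split.
  apply: allprime_cat; (apply: allprime_mono; last eassumption);
    by move=> z Mz; exists z, 0; rewrite mul0r addr0.
move=> z /prodin_cat [z1 [z2 [h1 [h2 ->]]]].
have [i [c [Mi ->]]] := hpa _ h1.
have [j [d [Mj ->]]] := hpb _ h2.
have -> : (i + c * a) * (j + d * b) = i * (j + d * b) + c * (a * j) + (c * d) * (a * b).
  by ring.
apply: idealD => //; last exact: idealMl.
apply: idealD => //; first exact: idealMr.
by apply: idealMl => //; apply: idealMl.
Qed.

Definition P0 (R : comNzRingType) : R -> Prop := fun _ => True.

Lemma zero_cover (R : comNzRingType) : fin_gen_ring R -> reduced_ring R ->
  exists ps : seq (R -> Prop), allprime (fun z => z = 0) ps /\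
    forall z, (forall i, (i < size ps)%N -> nth (@P0 R) ps i z) -> z = 0.
Proof.
move=> fg red.
have hI : ideal (fun z : R => z = 0).
  by split => //; split => [a b -> ->|a b ->]; rewrite ?subr0 ?mulr0.
have [ps [ap hp]] := all_covered (fg_noeth fg) hI.
exists ps; split => // z hz; apply: (red z (size ps)); apply: hp.
clear ap; elim: ps hz => [|p ps IH] hz /=; first by rewrite expr0.
exists z, (z ^+ size ps); split; first exact: (hz 0%N).
split; last by rewrite exprS.
by apply: IH => i lti; apply: (hz i.+1).
Qed.

Lemma prime_nth (R : comNzRingType) (I : R -> Prop) ps i :
  allprime I ps -> (i < size ps)%N -> prime_id (nth (@P0 R) ps i).
Proof.
elim: ps i => [//|p ps IH] [|i] /= [h1 [_ h3]] lti //; exact: IH.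
Qed.

Unset Implicit Arguments.

Theorem proposition2p6 (R : comNzRingType) (alpha : {rmorphism R -> int}) (r : R) :
  fin_gen_ring R -> reduced_ring R -> regular_elt alpha r ->
  exists S : seq R, forall x : R,
    exists m : nat, knutson_index_is r x m /\ subindex_is S r x (Some m).
Proof.
move=> fg red [aN reg].
have [ps [ap hcov]] := zero_cover fg red.
set n := size ps in hcov.
pose pp i := nth (@P0 R) ps i.
have ppr i : (i < n)%N -> prime_id (pp i) := prime_nth ap.
have ez y : r * (y - (alpha y)%:~R) = 0.
  by rewrite mulrBr mulrzr [r * y]mulrC reg subrr.
have fwd a x v : a * x = r *~ v -> alpha a * alpha x = alpha r * v /\
    (forall i, (i < n)%N -> pp i r -> ~ pp i x -> pp i a).
  move=> e; split; first by rewrite -rmorphM e rmorphMz mulrzz.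
  move=> i lti pr nx; have [hid [_ hpr]] := ppr i lti.
  have : pp i (a * x) by rewrite e -mulrzr; apply: idealMr.
  by case/hpr.
have bwd a x v : alpha a * alpha x = alpha r * v ->
    (forall i, (i < n)%N -> pp i r -> ~ pp i x -> pp i a) -> a * x = r *~ v.
  move=> e hT; apply/eqP; rewrite -subr_eq0; apply/eqP; apply: hcov => i lti.
  have [hid [_ hpr]] := ppr i lti.
  case: (classic (pp i r)) => [pr|npr].
    case: (classic (pp i x)) => [px|npx].
      apply: idealB => //; first exact: idealMl.
      by rewrite -mulrzr; apply: idealMr.
    apply: idealB => //; first by apply: idealMr => //; apply: hT.
    by rewrite -mulrzr; apply: idealMr.
  have pe y : pp i (y - (alpha y)%:~R).
    have : pp i (r * (y - (alpha y)%:~R)) by rewrite ez; exact: ideal0.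
    by case/hpr.
  have e' : (alpha a)%:~R * (alpha x)%:~R = (alpha r)%:~R * v%:~R :> R by rewrite -!intrM e.
  have -> : a * x - r *~ v = (a - (alpha a)%:~R) * x + (alpha a)%:~R * (x - (alpha x)%:~R)
      - (r - (alpha r)%:~R) * v%:~R.
    rewrite -mulrzr.
    have -> : (a - (alpha a)%:~R) * x + (alpha a)%:~R * (x - (alpha x)%:~R)
      - (r - (alpha r)%:~R) * v%:~R = a * x - r * v%:~R
         - ((alpha a)%:~R * (alpha x)%:~R - (alpha r)%:~R * v%:~R) by ring.
    by rewrite e' subrr subr0.
  apply: idealB => //; last exact: idealMr hid (pe r).
  by apply: idealD => //; [exact: idealMr hid (pe a) | exact: idealMl hid (pe x)].
pose Qm (T : {set 'I_n}) (a : R) := forall i : 'I_n, i \in T -> pp i a.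
pose pick T j := epsilon (inhabits 0) (fun s => Qm T s /\ alpha s = j).
pose Nn := `|alpha r|%N.
pose jr := map (fun i : nat => i%:Z) (seq.iota 0 Nn.+1) ++ map (fun i : nat => - i%:Z) (seq.iota 0 Nn.+1).
exists [seq pick T j | T <- enum [set: {set 'I_n}], j <- jr] => x.
pose V z := exists a, a * x = r *~ z.
have hV : ideal V.
  split; first by exists 0; rewrite mul0r mulr0z.
  split.
    by move=> z1 z2 [a1 h1] [a2 h2]; exists (a1 - a2); rewrite mulrBl h1 h2 mulrzBr.
  move=> c z [a h]; exists (c%:~R * a).
  by rewrite -mulrA h mulrzl -mulrzA mulrC.
have [m hm] := int_principal hV.
exists m.
have Vm : V m by apply/hm.
have [s [sS sx]] : exists s, s \in [seq pick T j | T <- enum [set: {set 'I_n}], j <- jr] /\ s * x = r *~ m.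
  have [a0 ha0] := Vm.
  have [a [ha abound]] : exists a, a * x = r *~ m /\ (`|alpha a| <= Nn)%N.
    case: (eqVneq (alpha x) 0) => [ax0|axn0].
      exists 0; split; last by rewrite rmorph0.
      have := (fwd _ _ _ ha0).1; rewrite ax0 mulr0 => /esym /eqP.
      rewrite mulf_eq0 (negbTE aN) /= => /eqP ->.
      by rewrite mul0r mulr0z.
    exists a0; split => //.
    have Vax : V (alpha x) by exists r; rewrite mulrC reg.
    have mdiv : (m %| `|alpha x|)%N by move: (proj1 (hm _) Vax); rewrite dvdzE.
    have mle : (m <= `|alpha x|)%N by apply: dvdn_leq => //; rewrite absz_gt0.
    have e2 : (`|alpha a0| * `|alpha x| = Nn * m)%N.
      by rewrite -abszM (fwd _ _ _ ha0).1 abszM.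
    have xpos : (0 < `|alpha x|)%N by rewrite absz_gt0.
    nia.
  set T := [set i : 'I_n | pb (pp i r /\ ~ pp i x)].
  have QTa : Qm T a.
    by move=> i; rewrite inE => /pbE [pr npx]; exact: (fwd _ _ _ ha).2 i (ltn_ord i) pr npx.
  have hpick : Qm T (pick T (alpha a)) /\ alpha (pick T (alpha a)) = alpha a.
    by apply: (epsilon_spec (inhabits 0) (fun s => Qm T s /\ alpha s = alpha a)); exists a.
  exists (pick T (alpha a)); split.
    apply: allpairs_f; first by rewrite mem_enum in_setT.
    move: abound; case: (alpha a) => k /= kle; rewrite mem_cat; apply/orP.
      by left; apply: map_f; rewrite mem_iota.
    by right; rewrite NegzE; apply: (map_f (fun i : nat => - i%:Z)); rewrite mem_iota.
  apply: bwd; first by rewrite hpick.2 (fwd _ _ _ ha).1.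
  move=> i lti pr npx; apply: (hpick.1 (Ordinal lti)); rewrite inE; apply/pbE; by split.
split.
  move=> y; split.
    move=> [[a ->] [z e]].
    have : V z by exists a.
    move/hm/dvdzP => [k hk]; exists k; by rewrite e hk mulrC.
  move=> [k ->]; split; last by exists (m%:Z * k).
  have : V (m%:Z * k) by apply/hm; apply: dvdz_mulr.
  by move=> [a <-]; exists a.
split; first by exists s => //; exists m%:Z.
move=> d; split.
  move=> dm i [s' _ e]; apply: dvdz_trans dm _; apply/hm; by exists s'.
by move=> h; apply: h; exists s.
Qed.
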